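(* Let $f,g\in\mathbb{C}(z)$ be rational functions of the same degree $d>1$, and let $C\subset\mathbb{P}^1\times\mathbb{P}^1$ be a curve which projects dominantly onto both coordinates. If $C$ is preperiodic under the endomorphism $\Phi(x,y)=(f(x),g(y))$ of $\mathbb{P}^1\times\mathbb{P}^1$, then $C$ contains infinitely many points preperiodic under $\Phi$.
   Context: A curve $Y$ is preperiodic under $\Phi$ if $\Phi^m(Y)=\Phi^n(Y)$ for some integers $n>m\ge0$; a point is preperiodic if its forward orbit is finite. *)

(* Defs.v *)
From HB Require Import structures.
From mathcomp Require Import all_boot all_order all_algebra.
From mathcomp Require Import complex.
From mathcomp Require Import Rstruct.
From Stdlib Require Import Reals.
Set Implicit Arguments.
Unset Strict Implicit.
Unset Printing Implicit Defensive.
Import Order.TTheory GRing.Theory Num.Theory.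
Local Open Scope ring_scope.

Notation C := (complex Rdefinitions.R).

(* The projective line P^1(C) = C ∪ {∞}; None is the point at infinity. *)
Definition P1 : Type := option C.

Definition hcoords (u : P1) : C * C :=
  if u is Some x then (x, 1) else (1, 0).

Definition homog (n : nat) (p : {poly C}) (x0 x1 : C) : C :=
  \sum_(i < n.+1) p`_i * x0 ^+ i * x1 ^+ (n - i).

(* A rational function f = p/q of degree d is given by coprime polynomials
   p, q with max(deg p, deg q) = d, i.e. maxn (size p) (size q) = d.+1. *)
Definition is_ratfun (p q : {poly C}) (d : nat) : Prop :=
  coprimep p q /\ maxn (size p) (size q) = d.+1.

Definition ratapp (p q : {poly C}) (d : nat) (u : P1) : P1 :=
  let: (x0, x1) := hcoords u in
  let a := homog d p x0 x1 in
  let b := homog d q x0 x1 in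
  if b == 0 then None else Some (a / b).

(* Polynomials F(x,y) in two variables: F : {poly {poly C}}, the outer
   variable is y and the inner one is x, so the coefficient of x^i y^j is
   (F`_j)`_i. *)
Definition degy (F : {poly {poly C}}) : nat := (size F).-1.
Definition ycoef (F : {poly {poly C}}) (j : nat) : {poly C} := F`_j.
Definition degx (F : {poly {poly C}}) : nat :=
  (\max_(j < size F) (size (ycoef F j)).-1)%N.

Definition bihom (F : {poly {poly C}}) (x0 x1 y0 y1 : C) : C :=
  \sum_(j < (degy F).+1) \sum_(i < (degx F).+1)
     (F`_j)`_i * x0 ^+ i * x1 ^+ (degx F - i) * y0 ^+ j * y1 ^+ (degy F - j).

Definition irreducible2 (F : {poly {poly C}}) : Prop :=
  ~ (F \is a GRing.unit) /\ F != 0 /\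
  forall G H : {poly {poly C}}, F = G * H ->
    (G \is a GRing.unit) \/ (H \is a GRing.unit).

(* The (irreducible) curve in P^1 x P^1 which is the closure of {F(x,y)=0},
   i.e. the zero locus of the bihomogenization of F. *)
Definition curve (F : {poly {poly C}}) (z : P1 * P1) : Prop :=
  let: (x0, x1) := hcoords z.1 in
  let: (y0, y1) := hcoords z.2 in
  bihom F x0 x1 y0 y1 = 0.

Definition img {T : Type} (Phi : T -> T) (S : T -> Prop) : T -> Prop :=
  fun w => exists z, S z /\ Phi z = w.
Definition img_iter {T : Type} (Phi : T -> T) (n : nat) (S : T -> Prop)
  : T -> Prop := iter n (img Phi) S.

Definition preperiodic_set {T : Type} (Phi : T -> T) (Y : T -> Prop) : Prop :=
  exists m n : nat, (m < n)%nat /\ img_iter Phi m Y = img_iter Phi n Y.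

Definition preperiodic_pt {T : eqType} (Phi : T -> T) (z : T) : Prop :=
  exists s : seq T, forall n : nat, iter n Phi z \in s.

Definition infinite_set {T : eqType} (S : T -> Prop) : Prop :=
  ~ exists s : seq T, forall z, S z -> z \in s.

Definition split_map (f g : P1 -> P1) (z : P1 * P1) : P1 * P1 :=
  (f z.1, g z.2).

(* Main.v *)
Require Import Defs.
From mathcomp Require Import all_boot all_order all_algebra complex Rstruct.
From mathcomp Require Import ring.
From Stdlib Require Import ClassicalEpsilon Classical.
Set Implicit Arguments.
Unset Strict Implicit.
Unset Printing Implicit Defensive.
Local Open Scope ring_scope.
Import GRing.Theory Num.Theory.


Lemma homog_fin n (h : {poly C}) a : (size h <= n.+1)%N -> homog n h a 1 = h.[a].
Proof.
move=> hs; rewrite /homog (horner_coef_wide _ hs).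
by apply: eq_bigr => i _; rewrite expr1n mulr1.
Qed.

Lemma homog_inf n (h : {poly C}) : homog n h 1 0 = h`_n.
Proof.
rewrite /homog big_ord_recr /= subnn expr0 mulr1 expr1n mulr1 big1 ?add0r //.
move=> i _; rewrite expr0n.
have -> : (n - i == 0)%N = false by apply/negbTE; rewrite subn_eq0 -ltnNge.
by rewrite mulr0.
Qed.

Lemma size_le_coef n (h : {poly C}) : (size h <= n.+1)%N -> (size h <= n)%N = (h`_n == 0).
Proof.
move=> hs; case: (ltnP n (size h)) => hn.
  have e : size h = n.+1 by apply/eqP; rewrite eqn_leq hs hn.
  have hnz : h != 0 by rewrite -size_poly_eq0 e.
  have : h`_n = lead_coef h by rewrite lead_coefE e.
  by move=> ->; rewrite lead_coef_eq0 (negbTE hnz).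
by rewrite nth_default // eqxx.
Qed.

Definition P1root (h : {poly C}) (n : nat) (x : P1) : bool :=
  if x is Some a then root h a else (size h <= n)%N.

Lemma P1root_fin (h : {poly C}) n : h != 0 ->
  exists s : seq P1, forall x, P1root h n x -> x \in s.
Proof.
move=> hnz; case: (closed_field_poly_normal h) => r hr.
exists (None :: map Some r) => [[a|]] //=.
move=> ra; rewrite inE /= mem_map; last by move=> ? ? [].
move: ra; rewrite hr /root hornerZ mulf_eq0 lead_coef_eq0 (negbTE hnz) /=.
by rewrite -/(root _ a) root_prod_XsubC.
Qed.

Lemma P1root_ex (h : {poly C}) n : (size h <= n.+1)%N -> (0 < n)%N ->
  exists x, P1root h n x.
Proof.
move=> hs hn; case: (leqP (size h) n) => hh; first by exists None.
have : size h != 1%N by rewrite neq_ltn; apply/orP; right; apply: leq_ltn_trans hh.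
by move/closed_rootP => [a ha]; exists (Some a).
Qed.

Lemma homog_P1root n (h : {poly C}) (x : P1) : (size h <= n.+1)%N ->
  (let: (x0, x1) := hcoords x in homog n h x0 x1 == 0) = P1root h n x.
Proof.
move=> hs; case: x => [a|] /=; first by rewrite homog_fin.
by rewrite homog_inf size_le_coef.
Qed.

Section Rat.
Variables (d : nat) (p q : {poly C}).
Hypothesis hd : (1 < d)%N.
Hypothesis hf : is_ratfun p q d.

Let f := ratapp p q d.

Lemma size_p : (size p <= d.+1)%N.
Proof. by case: hf => _ <-; rewrite leq_maxl. Qed.
Lemma size_q : (size q <= d.+1)%N.
Proof. by case: hf => _ <-; rewrite leq_maxr. Qed.
Lemma cop : coprimep p q. Proof. by case: hf. Qed.

Definition fib (w : P1) : {poly C} := if w is Some b then p - b%:P * q else q.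

Lemma size_fib w : (size (fib w) <= d.+1)%N.
Proof.
case: w => [b|] /=; last exact: size_q.
apply: leq_trans (size_add _ _) _; rewrite size_opp geq_max size_p /=.
by rewrite mul_polyC; apply: leq_trans (size_scale_leq _ _) size_q.
Qed.

Lemma not_both_small : ~~ ((size p <= d) && (size q <= d))%N.
Proof. by case: hf => _ e; rewrite -geq_max e ltnn. Qed.

Lemma fibE x w : (f x == w) = P1root (fib w) d x.
Proof.
rewrite /f /ratapp; case: x => [a|] /=.
  rewrite !homog_fin ?size_p ?size_q //.
  case: w => [b|] /=; case: ifP => hq /=.
  - apply/esym/negbTE; rewrite /root !hornerE; move/eqP: hq => hq.
    rewrite hq mulr0 subr0; apply/negP => /eqP hp.
    by move: (@coprimep_root _ p q a cop); rewrite /root hp hq eqxx => /(_ isT).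
  - rewrite /root !hornerE subr_eq0; apply/eqP/eqP => [[<-]|->].
      by rewrite divfK // hq.
    by rewrite mulfK // hq.
  - by rewrite /root hq.
  - by rewrite /root hq.
rewrite !homog_inf; case: w => [b|] /=; last first.
  by case: ifP => hq; rewrite size_le_coef ?size_q // hq.
rewrite (@size_le_coef d (p - b%:P * q)); last by move: (size_fib (Some b)).
rewrite coefB coefCM.
case: ifP => hq.
  move/eqP: hq => hq; rewrite hq mulr0 subr0.
  move: not_both_small; rewrite (size_le_coef size_p) (size_le_coef size_q) hq eqxx andbT.
  by move=> hp; rewrite (negbTE hp).
rewrite subr_eq0; apply/eqP/eqP => [[<-]|->]; first by rewrite divfK // hq.
by rewrite mulfK // hq.
Qed.

Lemma fib_nz w : fib w != 0.
Proof.
case: w => [b|] /=; last first.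
  apply/negP => /eqP hq; move: cop; rewrite hq coprimep0 => /eqp_size.
  rewrite size_poly1 => sp; move: not_both_small; rewrite sp hq size_poly0.
  by rewrite (leq_trans _ hd).
rewrite subr_eq0; apply/negP => /eqP hp; move: cop; rewrite hp coprimepMl.
case/andP => _; rewrite coprimepp => /eqP sq.
move: not_both_small; rewrite hp sq.
have : (size (b%:P * q)%R <= 1)%N.
  by apply: leq_trans (size_mul_leq _ _) _; rewrite sq size_polyC addn1; case: (b != 0).
by move=> h1; rewrite (leq_trans h1 (ltnW hd)) (ltnW hd).
Qed.

Lemma fiber_fin w : exists s : seq P1, forall x, f x = w -> x \in s.
Proof.
case: (P1root_fin d (fib_nz w)) => s hs; exists s => x hx; apply: hs.
by rewrite -fibE hx.
Qed.

Lemma fiber_ex w : exists x, f x = w.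
Proof.
case: (P1root_ex (size_fib w) (ltnW hd)) => x hx; exists x.
by apply/eqP; rewrite fibE.
Qed.

End Rat.


Lemma coef_size (h : {poly C}) i : h`_i != 0 -> (i < size h)%N.
Proof. by rewrite ltnNge; apply: contra => /(nth_default 0) ->. Qed.

Lemma uniq_map_inj (T1 T2 : eqType) (g : T1 -> T2) (s : seq T1) :
  uniq (map g s) -> forall x1 x2, x1 \in s -> x2 \in s -> g x1 = g x2 -> x1 = x2.
Proof.
elim: s => //= y s IH /andP [ny us] x1 x2; rewrite !inE.
case/orP => [/eqP->|h1]; case/orP => [/eqP->|h2] // e.
- by move: ny; rewrite e map_f.
- by move: ny; rewrite -e map_f.
- exact: IH.
Qed.

Lemma deriv_pow (a : C) n : (('X - a%:P) ^+ n.+1)^`() = ('X - a%:P) ^+ n *+ n.+1.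
Proof. by rewrite deriv_exp derivXsubC mul1r. Qed.

Lemma polyn_eq0 (h : {poly C}) n : h *+ n.+1 = 0 -> h = 0.
Proof.
move=> e; apply/polyP => i; move/polyP: e => /(_ i); rewrite coefMn coef0 => /eqP.
by rewrite mulrn_eq0 /= => /eqP ->.
Qed.

Definition Lf (n : nat) (a : C) : {poly C} := ('X - a%:P) ^+ n.

Lemma red3 (a1 a2 a3 e1 e2 e3 : C) n :
  e1 *: Lf n.+1 a1 + e2 *: Lf n.+1 a2 + e3 *: Lf n.+1 a3 = 0 ->
  e1 *: Lf n a1 + e2 *: Lf n a2 + e3 *: Lf n a3 = 0.
Proof.
move=> /(congr1 (fun h => h^`())); rewrite /Lf !derivD !derivZ !deriv_pow deriv0.
by rewrite -!scalerMnr -!mulrnDl => /polyn_eq0.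
Qed.

Lemma red2 (a1 a2 e1 e2 e3 : C) n :
  e1 *: Lf n.+1 a1 + e2 *: Lf n.+1 a2 + e3 *: 1 = 0 ->
  e1 *: Lf n a1 + e2 *: Lf n a2 = 0.
Proof.
move=> /(congr1 (fun h => h^`())); rewrite /Lf !derivD !derivZ !deriv_pow deriv0.
rewrite derivC scaler0 addr0.
by rewrite -!scalerMnr -!mulrnDl => /polyn_eq0.
Qed.

Lemma red3n (a1 a2 a3 e1 e2 e3 : C) m n : (m <= n)%N ->
  e1 *: Lf n a1 + e2 *: Lf n a2 + e3 *: Lf n a3 = 0 ->
  e1 *: Lf m a1 + e2 *: Lf m a2 + e3 *: Lf m a3 = 0.
Proof.
elim: n => [|n IH]; first by rewrite leqn0 => /eqP ->.
rewrite leq_eqVlt => /orP [/eqP -> //|]; rewrite ltnS => hm h.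
by apply: IH => //; apply: red3.
Qed.

Lemma red2n (a1 a2 e1 e2 : C) m n : (m <= n)%N ->
  e1 *: Lf n a1 + e2 *: Lf n a2 = 0 ->
  e1 *: Lf m a1 + e2 *: Lf m a2 = 0.
Proof.
elim: n => [|n IH]; first by rewrite leqn0 => /eqP ->.
rewrite leq_eqVlt => /orP [/eqP -> //|]; rewrite ltnS => hm h.
apply: IH => //; apply: (@red2 _ _ _ _ 0); by rewrite scale0r addr0.
Qed.

Lemma ev_Lf n a x : (Lf n a).[x] = (x - a) ^+ n.
Proof. by rewrite /Lf horner_exp !hornerE. Qed.

Lemma indep3 (a1 a2 a3 e1 e2 e3 : C) n : (1 < n)%N ->
  a1 != a2 -> a1 != a3 -> a2 != a3 ->
  e1 *: Lf n a1 + e2 *: Lf n a2 + e3 *: Lf n a3 = 0 ->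
  [/\ e1 = 0, e2 = 0 & e3 = 0].
Proof.
move=> hn h12 h13 h23 h.
have h2 := red3n hn h.
have h1 := red3n (ltnW hn) h.
have E2 x := congr1 (fun g => g.[x]) h2.
have E1 x := congr1 (fun g => g.[x]) h1.
move: (E2 a3) (E1 a3) (E1 a1); rewrite !hornerD !hornerZ !ev_Lf !horner0 !subrr !expr1 ?expr0n /=.
rewrite !mulr0 !addr0 => q2 q1 q1'.
have k : e2 * (a3 - a2) * (a1 - a2) = 0.
  have -> : e2 * (a3 - a2) * (a1 - a2) =
     (e1 * (a3 - a1) ^+ 2 + e2 * (a3 - a2) ^+ 2) - (a3 - a1) * (e1 * (a3 - a1) + e2 * (a3 - a2)).
    by ring.
  by rewrite q2 q1 mulr0 subrr.
have e20 : e2 = 0.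
  move/eqP: k; rewrite !mulf_eq0 !subr_eq0 => /orP [/orP [/eqP //|]|].
    by rewrite eq_sym (negbTE h23).
  by rewrite (negbTE h12).
move: q1; rewrite e20 mul0r addr0 => /eqP.
rewrite mulf_eq0 subr_eq0 [a3 == a1]eq_sym (negbTE h13) orbF => /eqP e10.
move: q1'; rewrite e20 mul0r !add0r => /eqP.
rewrite mulf_eq0 subr_eq0 (negbTE h13) orbF => /eqP e30.
by [].
Qed.

Lemma indep2 (a1 a2 e1 e2 e3 : C) n : (1 < n)%N -> a1 != a2 ->
  e1 *: Lf n a1 + e2 *: Lf n a2 + e3 *: 1 = 0 ->
  [/\ e1 = 0, e2 = 0 & e3 = 0].
Proof.
case: n => // n hn h12 h.
have h1 := @red2n _ _ _ _ 1 n hn (red2 h).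
move: (congr1 (fun g => g.[a1]) h1) (congr1 (fun g => g.[a2]) h1).
rewrite !hornerD !hornerZ !ev_Lf !horner0 !subrr !expr1 /= !mulr0 add0r addr0 => /eqP q1 /eqP q2.
move: q1; rewrite mulf_eq0 subr_eq0 (negbTE h12) orbF => /eqP e20.
move: q2; rewrite mulf_eq0 subr_eq0 [a2 == a1]eq_sym (negbTE h12) orbF => /eqP e10.
move: h; rewrite e10 e20 !scale0r !add0r => /(congr1 (fun g : {poly C} => g`_0)).
by rewrite coefZ coef1 mulr1 coef0.
Qed.


Definition Lu n (u : P1) : {poly C} := if u is Some a then Lf n a else 1.

Lemma indep_gen n (u1 u2 u3 : P1) (e1 e2 e3 : C) : (1 < n)%N ->
  u1 != u2 -> u1 != u3 -> u2 != u3 ->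
  e1 *: Lu n u1 + e2 *: Lu n u2 + e3 *: Lu n u3 = 0 -> e1 = 0.
Proof.
move=> hn; case: u1 => [a1|]; case: u2 => [a2|]; case: u3 => [a3|] //= h12 h13 h23 h.
- by case: (indep3 hn h12 h13 h23 h).
- by case: (indep2 hn h12 h).
- by move: h; rewrite addrAC => /(indep2 hn h13) [].
- by move: h; rewrite -addrA addrC => /(indep2 hn h23) [].
Qed.

Lemma dbl_prod (r : seq C) : ~~ uniq r ->
  exists a g, \prod_(z <- r) ('X - z%:P) = ('X - a%:P) ^+ 2 * g.
Proof.
elim: r => //= z r IH; rewrite negb_and negbK big_cons.
case/orP => [zr|/IH [a [g e]]]; last by exists a, (('X - z%:P) * g); rewrite e; ring.
have : root (\prod_(z0 <- r) ('X - z0%:P)) z by rewrite root_prod_XsubC.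
case/factor_theorem => g e; exists z, g; rewrite e; ring.
Qed.

Lemma three_roots (h : {poly C}) n : (2 < n)%N -> h != 0 -> (size h <= n.+1)%N ->
  (forall a, root h a -> ~ exists g, h = ('X - a%:P) ^+ 2 * g) ->
  ~~ (size h <= n.-1)%N ->
  exists u1 u2 u3 : P1, [/\ P1root h n u1, P1root h n u2, P1root h n u3 &
     [/\ u1 != u2, u1 != u3 & u2 != u3]].
Proof.
move=> hn hnz hs hsimp hinf.
case: (closed_field_poly_normal h) => r hr.
have cnz : lead_coef h != 0 by rewrite lead_coef_eq0.
have ur : uniq r.
  apply/negPn/negP => /dbl_prod [a [g e]].
  have ra : root h a.
    by rewrite hr e /root hornerZ hornerM horner_exp hornerXsubC subrr expr0n /= mul0r mulr0.
  apply: (hsimp a ra); exists (lead_coef h *: g); rewrite {1}hr e.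
  by rewrite scalerAr.
have sr : size h = (size r).+1.
  by rewrite {1}hr size_scale // size_prod_XsubC.
have rr z : z \in r -> root h z.
  by move=> zr; rewrite hr rootZ // root_prod_XsubC.
case: (ltnP n (size h)) => hh.
  have szr : size r = n by apply/eqP; rewrite -eqSS -sr eqn_leq hs hh.
  case: r ur sr rr szr hr => [|z1 [|z2 [|z3 r]]] //=; try by move=> *; subst n.
  rewrite !inE !negb_or => /and4P [/and3P [n12 n13 _] /andP [n23 _] _ _] _ rr _ _.
  exists (Some z1), (Some z2), (Some z3); split => //=; apply: rr; rewrite !inE eqxx ?orbT //.
have e : size h = n.
  apply/eqP; rewrite eqn_leq hh /=; move: hinf; rewrite -ltnNge.
  by case: (n) hn => // n' _.
have szr : (2 <= size r)%N by rewrite -ltnS -sr e.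
have hN : P1root h n None by rewrite /= e.
case: r ur sr rr szr hr => [|z1 [|z2 r]] //=.
rewrite !inE !negb_or => /andP [/andP [n12 _] _] _ rr _ _.
exists (Some z1), (Some z2), None; split => //=; apply: rr; rewrite !inE eqxx ?orbT //.
Qed.


Lemma iter_mul_one (x : {poly C}) n : iter n ( *%R x) 1 = x ^+ n.
Proof. by elim: n => //= n ->; rewrite exprS. Qed.

Section Dyn.
Variables (d : nat) (p q : {poly C}).
Hypothesis hd : (1 < d)%N.
Hypothesis hf : is_ratfun p q d.

Let f := ratapp p q d.

Definition totram (y : P1) := forall x1 x2, f x1 = y -> f x2 = y -> x1 = x2.

Lemma fib_form u : f u = u -> totram u ->
  exists c, c != 0 /\ fib p q u = c *: Lu d u.
Proof.
move=> fu tu; case: u fu tu => [a|] fu tu /=.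
  set h := p - a%:P * q.
  have hsz : size h = d.+1.
    apply/eqP; rewrite eqn_leq (size_fib hf (Some a)) /= ltnNge; apply/negP => hs.
    have : f None = Some a by apply/eqP; rewrite (fibE hf).
    by move/(tu _ _)/(_ fu).
  have hroot z : root h z -> z = a.
    move=> rz; have : f (Some z) = Some a by apply/eqP; rewrite (fibE hf).
    by move/(tu _ _)/(_ fu) => [].
  case: (closed_field_poly_normal h) => r hr.
  have hnz : h != 0 by rewrite -size_poly_eq0 hsz.
  have ra : all (pred1 a) r.
    apply/allP => z zr /=; apply/eqP/hroot.
    by rewrite hr rootZ ?lead_coef_eq0 // root_prod_XsubC.
  have szr : size r = d.
    by apply/eqP; rewrite -eqSS -hsz {1}hr size_scale ?lead_coef_eq0 // size_prod_XsubC.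
  exists (lead_coef h); split; first by rewrite lead_coef_eq0.
  rewrite {1}hr (all_pred1P _ _ ra) big_nseq szr iter_mul_one.
  by [].
have nr z : ~~ root q z.
  apply/negP => rz; have : f (Some z) = None by apply/eqP; rewrite (fibE hf).
  by move/(tu _ _)/(_ fu).
have sq : size q = 1%N.
  apply/eqP; apply/negPn/negP => /closed_rootP [z rz].
  by move: (nr z); rewrite rz.
exists (q`_0); split.
  have : q`_0 = lead_coef q by rewrite lead_coefE sq.
  by move=> ->; rewrite lead_coef_eq0 -size_poly_eq0 sq.
by rewrite -mul_polyC mulr1 -size1_polyC ?sq.
Qed.

Definition phi : {poly C} := p - 'X * q.

Lemma size_phi : (size phi <= d.+2)%N.
Proof.
apply: leq_trans (size_add _ _) _; rewrite size_opp geq_max.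
rewrite (leq_trans (size_p hf)) //=.
apply: leq_trans (size_mul_leq _ _) _; rewrite size_polyX.
by rewrite addSn add1n ltnS (size_q hf).
Qed.

Lemma fixE x : (f x == x) = P1root phi d.+1 x.
Proof.
rewrite (fibE hf); case: x => [a|] /=.
  by rewrite /root /phi !hornerE.
rewrite (size_le_coef (size_q hf)) (size_le_coef size_phi) /phi coefB coefXM /=.
rewrite (@nth_default _ 0 p d.+1) ?sub0r ?oppr_eq0 //.
by apply: leq_trans (size_p hf) _.
Qed.

Lemma phi_nz : phi != 0.
Proof.
rewrite /phi subr_eq0; apply/negP => /eqP hp; move: (cop hf); rewrite hp coprimepMl.
case/andP => _; rewrite coprimepp => /eqP sq.
case: hf => _; rewrite hp mulrC size_mulX ?sq; last by rewrite -size_poly_eq0 sq.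
have -> : maxn 2 1 = 2%N by []. by case=> e; move: hd; rewrite -e.
Qed.

Lemma fix_simple_fin a : f (Some a) = Some a -> totram (Some a) ->
  ~ exists g, phi = ('X - a%:P) ^+ 2 * g.
Proof.
move=> fu tu [g eg]; case: (fib_form fu tu) => c [cnz ec]; move: ec => /= ec.
have e1 : phi = (p - a%:P * q) - ('X - a%:P) * q by rewrite /phi; ring.
have dd : d = d.-1.+1 by case: (d) hd.
have e2 : ('X - a%:P) * (c *: ('X - a%:P) ^+ d.-1 - q - ('X - a%:P) * g) = 0.
  have : (p - a%:P * q) - ('X - a%:P) * q - ('X - a%:P) ^+ 2 * g = 0 by rewrite -e1 eg subrr.
  rewrite ec /Lf {1}dd exprS => <-.
  rewrite -!mul_polyC; ring.
move: e2 => /eqP; rewrite mulf_eq0 polyXsubC_eq0 /= => /eqP e3.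
have qa : q.[a] = 0.
  move: (congr1 (fun h => h.[a]) e3); rewrite !hornerE subrr mul0r subr0.
  have dz : (d.-1 == 0%N) = false by case: (d) hd => // [[]].
  rewrite expr0n dz mulr0 sub0r => /eqP.
  by rewrite oppr_eq0 => /eqP.
have pa : root p a.
  move: (congr1 (fun h => h.[a]) ec); rewrite /Lf hornerZ horner_exp hornerXsubC subrr expr0n.
  have dz : (d == 0%N) = false by case: (d) hd.
  rewrite dz mulr0.
  by rewrite !hornerE qa mulr0 subr0 => /eqP.
by move: (coprimep_root (cop hf) pa); rewrite qa eqxx.
Qed.

Lemma fix_simple_inf : f None = None -> totram None -> ~~ (size phi <= d)%N.
Proof.
move=> fu tu; case: (fib_form fu tu) => c [cnz ec]; move: ec => /= ec.
rewrite -ltnNge; apply: coef_size.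
rewrite /phi coefB coefXM ec coefZ coef1 /=.
have -> : (d.-1 == 0%N) = false by case: (d) hd => // [[]].
have -> : (d == 0%N) = false by case: (d) hd.
rewrite mulr0 subr0.
have : ~~ (size p <= d)%N.
  move: (not_both_small hf); rewrite ec size_scale // size_poly1.
  by rewrite (ltnW hd) andbT.
by rewrite (size_le_coef (size_p hf)).
Qed.

End Dyn.


Section Inf.
Variables (d : nat) (p q : {poly C}).
Hypothesis hd : (1 < d)%N.
Hypothesis hf : is_ratfun p q d.

Local Notation f := (ratapp p q d).

Lemma rel3 (u1 u2 u3 : P1) : u1 != u2 -> u1 != u3 -> u2 != u3 ->
  exists k1 k2 k3 : C, [/\ k1 != 0, k2 != 0, k3 != 0 &
    k1 *: fib p q u1 + k2 *: fib p q u2 + k3 *: fib p q u3 = 0].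
Proof.
case: u1 => [b1|]; case: u2 => [b2|]; case: u3 => [b3|] //= h12 h13 h23.
- exists (b2 - b3), (b3 - b1), (b1 - b2); rewrite !subr_eq0 h23 [b3 == b1]eq_sym h13 h12.
  split => //; apply/polyP => i; rewrite !(coefD, coefZ, coefN, coefB, coefCM, coef0); ring.
- exists 1, (-1), (b1 - b2); rewrite oner_eq0 oppr_eq0 oner_eq0 subr_eq0 h12.
  split => //; apply/polyP => i; rewrite !(coefD, coefZ, coefN, coefB, coefCM, coef0); ring.
- exists 1, (b1 - b3), (-1); rewrite oner_eq0 oppr_eq0 oner_eq0 subr_eq0 h13.
  split => //; apply/polyP => i; rewrite !(coefD, coefZ, coefN, coefB, coefCM, coef0); ring.
- exists (b2 - b3), 1, (-1); rewrite oner_eq0 oppr_eq0 oner_eq0 subr_eq0 h23.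
  split => //; apply/polyP => i; rewrite !(coefD, coefZ, coefN, coefB, coefCM, coef0); ring.
Qed.

Definition preper (x : P1) := preperiodic_pt f x.

Lemma pre_back x : preper (f x) -> preper x.
Proof. by case=> s hs; exists (x :: s) => [[|n]]; rewrite inE ?eqxx // iterSr hs orbT. Qed.

Lemma pre_fix x : f x = x -> preper x.
Proof.
move=> fx; exists [:: x] => n; rewrite inE; apply/eqP.
by elim: n => //= n ->.
Qed.

Lemma pre_fwd x : preper x -> preper (f x).
Proof. by case=> s hs; exists s => n; rewrite -iterSr. Qed.

Lemma preper_inf (s : seq P1) : exists x, preper x /\ x \notin s.
Proof.
apply: NNPP => H.
have Hs x : preper x -> x \in s.
  move=> px; apply/negPn/negP => nx; apply: H; by exists x.
pose pb x : bool := if excluded_middle_informative (preper x) then true else false.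
have pbP x : pb x = true <-> preper x.
  by rewrite /pb; case: excluded_middle_informative.
pose t := undup (filter pb s).
have memt x : x \in t <-> preper x.
  rewrite mem_undup mem_filter; split; first by case/andP => /pbP.
  by move=> px; rewrite (Hs _ px) andbT; apply/pbP.
have ut : uniq t by apply: undup_uniq.
have sub : {subset t <= map f t}.
  move=> y /memt py; case: (fiber_ex hd hf y) => x fx.
  have px : preper x by apply: pre_back; rewrite fx.
  by rewrite -fx map_f //; apply/memt.
have um : uniq (map f t).
  by apply: (@leq_size_uniq _ t); rewrite ?size_map.
have tr y : preper y -> totram d p q y.
  move=> py x1 x2 f1 f2.
  have p1 : preper x1 by apply: pre_back; rewrite f1.
  have p2 : preper x2 by apply: pre_back; rewrite f2.
  apply: (uniq_map_inj um); try exact/memt.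
  by rewrite f1 f2.
have fixtr u : f u = u -> totram d p q u by move=> fu; apply: tr; apply: pre_fix.
have hsimp a : root (phi p q) a -> ~ exists g, phi p q = ('X - a%:P) ^+ 2 * g.
  move=> ra; have fa : f (Some a) = Some a by apply/eqP; rewrite (fixE hf).
  exact: (fix_simple_fin hd hf fa (fixtr _ fa)).
have hinf : ~~ (size (phi p q) <= d.+1.-1)%N.
  apply/negP => hs.
  have fa : f None = None by apply/eqP; rewrite (fixE hf) /= (leq_trans hs).
  by move: (fix_simple_inf hd hf fa (fixtr _ fa)); rewrite hs.
have h2 : (2 < d.+1)%N by [].
case: (three_roots h2 (phi_nz hd hf) (size_phi hf) hsimp hinf) => u1 [u2 [u3 [r1 r2 r3 [n12 n13 n23]]]].
have f1 : f u1 = u1 by apply/eqP; rewrite (fixE hf).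
have f2 : f u2 = u2 by apply/eqP; rewrite (fixE hf).
have f3 : f u3 = u3 by apply/eqP; rewrite (fixE hf).
case: (fib_form hf f1 (fixtr _ f1)) => c1 [c1nz e1].
case: (fib_form hf f2 (fixtr _ f2)) => c2 [c2nz e2].
case: (fib_form hf f3 (fixtr _ f3)) => c3 [c3nz e3].
case: (rel3 n12 n13 n23) => k1 [k2 [k3 [k1nz k2nz k3nz ek]]].
move: ek; rewrite e1 e2 e3 !scalerA => /(indep_gen hd n12 n13 n23) /eqP.
by rewrite mulf_eq0 (negbTE k1nz) (negbTE c1nz).
Qed.

End Inf.


Section Gen.
Variables (f g : P1 -> P1) (Cv : P1 * P1 -> Prop).
Hypothesis ffib : forall w, exists s : seq P1, forall x, f x = w -> x \in s.
Hypothesis Cvert : forall x, exists s : seq P1, forall y, Cv (x, y) -> y \in s.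
Hypothesis Cex : forall x, exists y, Cv (x, y).
Hypothesis fpre_inf : forall s : seq P1, exists x, preperiodic_pt f x /\ x \notin s.
Hypothesis hper : preperiodic_set (split_map f g) Cv.

Local Notation Phi := (split_map f g).
Local Notation Y j := (img_iter Phi j Cv).

Lemma preim_list (L' : seq P1) : exists L : seq P1, forall x, f x \in L' -> x \in L.
Proof.
elim: L' => [|w L' [L IH]]; first by exists [::].
case: (ffib w) => s hs; exists (s ++ L) => x; rewrite inE mem_cat.
by case/orP => [/eqP /hs -> //|/IH ->]; rewrite orbT.
Qed.

Lemma iter_preim j (L' : seq P1) : exists L : seq P1, forall x, iter j f x \in L' -> x \in L.
Proof.
elim: j L' => [|j IH] L'; first by exists L'.
case: (IH L') => L1 h1; case: (preim_list L1) => L h; exists L => x.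
by rewrite iterSr => /h1 /h.
Qed.

Lemma vert_list (Lx : seq P1) : exists Ly : seq P1, forall x, x \in Lx -> forall y, Cv (x, y) -> y \in Ly.
Proof.
elim: Lx => [|x Lx [L IH]]; first by exists [::].
case: (Cvert x) => s hs; exists (s ++ L) => x'; rewrite inE.
case/orP => [/eqP -> y /hs h|/IH h y /h h']; first by rewrite mem_cat h.
by rewrite mem_cat h' orbT.
Qed.

Lemma iter_split j x y : iter j Phi (x, y) = (iter j f x, iter j g y).
Proof. by elim: j => //= j ->. Qed.

Lemma img_iter_char j z : Y j z -> exists z0, Cv z0 /\ iter j Phi z0 = z.
Proof.
elim: j z => [|j IH] z; first by exists z.
case=> z' [/IH [z0 [c0 e0]] e]; exists z0; split => //.
by rewrite iterS e0.
Qed.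

Lemma img_iter_mem j z : Cv z -> Y j (iter j Phi z).
Proof.
move=> cz; elim: j => //= j IH.
by exists (iter j Phi z).
Qed.

Lemma Yvert j x' : exists L : seq P1, forall y, Y j (x', y) -> y \in L.
Proof.
case: (iter_preim j [:: x']) => Lx hx; case: (vert_list Lx) => Ly hy.
exists (map (iter j g) Ly) => y /img_iter_char [[x0 y0] [c0]].
rewrite iter_split => [[e1 e2]].
have x0L : x0 \in Lx by apply: hx; rewrite e1 inE.
by rewrite -e2 map_f // (hy _ x0L).
Qed.

Lemma Yvert_seq j (Sx : seq P1) : exists L : seq P1, forall x', x' \in Sx -> forall y, Y j (x', y) -> y \in L.
Proof.
elim: Sx => [|x Sx [L IH]]; first by exists [::].
case: (Yvert j x) => s hs; exists (s ++ L) => x'; rewrite inE.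
case/orP => [/eqP -> y /hs h|/IH h y /h h']; first by rewrite mem_cat h.
by rewrite mem_cat h' orbT.
Qed.

Lemma Yvert_all n (Sx : seq P1) : exists L : seq P1,
  forall j, (j < n)%N -> forall x', x' \in Sx -> forall y, Y j (x', y) -> y \in L.
Proof.
elim: n => [|n [L IH]]; first by exists [::].
case: (Yvert_seq n Sx) => s hs; exists (s ++ L) => j; rewrite ltnS leq_eqVlt.
case/orP => [/eqP -> x' hx y /(hs _ hx) h|/IH h x' hx y /(h _ hx) h']; first by rewrite mem_cat h.
by rewrite mem_cat h' orbT.
Qed.

Lemma Y_fin : exists n, forall j, exists j', (j' < n)%N /\ Y j = Y j'.
Proof.
case: hper => m [n [mn e]]; exists n => j; elim: j => [|j [j' [hj' ej]]].
  by exists 0%N; split => //; apply: leq_ltn_trans mn.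
have eS : Y j.+1 = Y j'.+1 by rewrite /img_iter /= -/(img_iter Phi j Cv) ej.
case: (ltnP j'.+1 n) => h; first by exists j'.+1.
have ejn : j'.+1 = n by apply/eqP; rewrite eqn_leq h hj'.
by exists m; split => //; rewrite eS ejn.
Qed.

Theorem gen_main : infinite_set (fun z => Cv z /\ preperiodic_pt Phi z).
Proof.
case=> s hs.
case: (fpre_inf (map fst s)) => x [[Sx hSx] nx].
case: (Cex x) => y cxy.
case: Y_fin => n hn.
case: (Yvert_all n Sx) => L hL.
have pz : preperiodic_pt Phi (x, y).
  exists [seq (a, b) | a <- Sx, b <- L] => k.
  rewrite iter_split; apply: allpairs_f => //.
  case: (hn k) => j' [hj' ek].
  apply: (hL j' hj' _ (hSx k)); rewrite -ek -iter_split.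
  exact: img_iter_mem.
move: (hs _ (conj cxy pz)) => hin.
by move: nx; rewrite (map_f fst hin).
Qed.

End Gen.


Definition hx (F : {poly {poly C}}) (x : P1) (j : nat) : C :=
  let: (x0, x1) := hcoords x in homog (degx F) F`_j x0 x1.

Definition Gx (F : {poly {poly C}}) (x : P1) : {poly C} :=
  \poly_(j < (degy F).+1) hx F x j.

Lemma bihom_homog F x0 x1 y0 y1 :
  bihom F x0 x1 y0 y1 = homog (degy F) (\poly_(j < (degy F).+1) homog (degx F) F`_j x0 x1) y0 y1.
Proof.
rewrite /bihom /homog; apply: eq_bigr => j _; rewrite coef_poly ltn_ord.
by rewrite !mulr_suml; apply: eq_bigr => i _.
Qed.

Lemma curveE F x y : curve F (x, y) <-> P1root (Gx F x) (degy F) y.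
Proof.
have hs : (size (Gx F x) <= (degy F).+1)%N by apply: size_poly.
rewrite -(homog_P1root y hs) /curve /Gx /hx; move: hs => _.
case: x => [a|]; case: y => [b|] /=; rewrite bihom_homog; by split => /eqP.
Qed.

Lemma size_Fj (F : {poly {poly C}}) j : (size (F`_j)%R <= (degx F).+1)%N.
Proof.
case: (ltnP j (size F)) => hj; last by rewrite nth_default // size_poly0.
have := @leq_bigmax _ (fun i : 'I_(size F) => (size (ycoef F i)).-1) (Ordinal hj).
rewrite /degx /ycoef /=; by case: (size F`_j).
Qed.

Lemma Gx_nz F x : irreducible2 F -> (0 < degx F)%N -> (0 < degy F)%N -> Gx F x != 0.
Proof.
case=> nu [Fnz hirr] hdx hdy.
have sF : size F = (degy F).+1.
  by rewrite /degy prednK // lt0n size_poly_eq0.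
apply/negP => /eqP G0.
have hz j : (j < size F)%N -> hx F x j = 0.
  by move=> hj; move/polyP: G0 => /(_ j); rewrite coef_poly -sF hj coef0.
case: x hz {G0} => [a|] hz.
  have ra j : root F`_j a.
    case: (ltnP j (size F)) => hj; last by rewrite nth_default // root0.
    by move: (hz j hj); rewrite /hx /= homog_fin ?size_Fj // => /eqP.
  pose H := map_poly (fun g : {poly C} => g %/ ('X - a%:P)) F.
  have eF : F = ('X - a%:P)%:P * H.
    apply/polyP => j; rewrite coefCM coef_map_id0 ?div0p // mulrC divpK //.
    by rewrite dvdp_XsubCl.
  case: (hirr _ _ eF).
    rewrite poly_unitE size_polyC polyXsubC_eq0 /= coefC /= poly_unitE size_XsubC.
    by [].
  rewrite poly_unitE => /andP [/eqP sH _].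
  have : (size F <= 1)%N.
    rewrite {1}eF; apply: leq_trans (size_mul_leq _ _) _.
    by rewrite sH size_polyC polyXsubC_eq0.
  by rewrite sF ltnS leqn0 => /eqP e; move: hdy; rewrite e.
have cF : (0 < #|'I_(size F)|)%N by rewrite card_ord sF.
case: (eq_bigmax (fun i : 'I_(size F) => (size (ycoef F i)).-1) cF) => j0 ej.
have e0 : degx F = (size F`_j0).-1 by rewrite /degx ej.
move: (hz j0 (ltn_ord j0)); rewrite /hx /= homog_inf e0 -lead_coefE.
move/eqP; rewrite lead_coef_eq0 => /eqP Fj0.
by move: hdx; rewrite e0 Fj0 size_poly0.
Qed.

Lemma curve_vert F : irreducible2 F -> (0 < degx F)%N -> (0 < degy F)%N ->
  forall x, exists s : seq P1, forall y, curve F (x, y) -> y \in s.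
Proof.
move=> irr hdx hdy x; case: (P1root_fin (degy F) (Gx_nz x irr hdx hdy)) => s hs.
by exists s => y /curveE /hs.
Qed.

Lemma curve_ex F : (0 < degy F)%N -> forall x, exists y, curve F (x, y).
Proof.
move=> hdy x; case: (@P1root_ex (Gx F x) (degy F) (size_poly _ _) hdy) => y hy.
by exists y; apply/curveE.
Qed.

Unset Implicit Arguments.
Set Strict Implicit.

Theorem lemma6p1 (d : nat) (p q r s : {poly C}) (F : {poly {poly C}}) :
  (1 < d)%N ->
  is_ratfun p q d -> is_ratfun r s d ->
  irreducible2 F -> (0 < degx F)%N -> (0 < degy F)%N ->
  preperiodic_set (split_map (ratapp p q d) (ratapp r s d)) (curve F) ->
  infinite_set (fun z => curve F z /\
     preperiodic_pt (split_map (ratapp p q d) (ratapp r s d)) z).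
Proof.
move=> hd hf hg irr hdx hdy hper.
apply: gen_main => //.
- exact: (fiber_fin hd hf).
- exact: (curve_vert irr hdx hdy).
- exact: (curve_ex hdy).
- exact: (preper_inf hd hf).
Qed.
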